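(* Let $h$ be a positive, non-decreasing, continuously differentiable function with $h(u)\to\infty$ and $uh'(u)/h(u)\to0$ as $u\to\infty$. Let $g(u)=h(u)/(uh'(u))$ and $$v(u)=\min\left(\log u,\ \min_{\log u\le t\le\log^2 u}g(t)\right).$$ Then $v(u)\to\infty$ as $u\to\infty$, and $$h(v(u)\log u)=(1+o(1))\,h(\log u)\quad\text{as } u\to\infty.$$
   Context: $\log^2u$ means $(\log u)^2$. *)

(* Defs.v *)
From Stdlib Require Import Reals.
From Coquelicot Require Import Coquelicot.
Open Scope R_scope.

(* g(t) = h(t) / (t h'(t)).  Only used where h'(t) > 0; where h'(t) = 0 the
   value of g is +infinity (see [v_set] below). *)
Definition gfun (h : R -> R) (t : R) : R := h t / (t * Derive h t).

(* The set  { log u } U { g(t) : log u <= t <= (log u)^2 , h'(t) > 0 }.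
   Points with h'(t) = 0 have g(t) = +oo and so do not affect the minimum. *)
Definition v_set (h : R -> R) (u : R) : R -> Prop :=
  fun y => y = ln u \/
    exists t, ln u <= t <= (ln u) ^ 2 /\ 0 < Derive h t /\ y = gfun h t.

(* v(u) = min( log u , min_{log u <= t <= log^2 u} g(t) ), realised as the
   infimum of [v_set h u] (it is attained for large u). *)
Definition vfun (h : R -> R) (u : R) : R := real (Glb_Rbar (v_set h u)).

(* Main.v *)
Require Import Defs.
From Stdlib Require Import Reals Lra.
From Coquelicot Require Import Coquelicot.
Open Scope R_scope.

Lemma glb_fin (E : R -> Prop) a M : E a -> (forall y, E y -> M <= y) ->
  exists r, Glb_Rbar E = Finite r /\ M <= r /\ forall y, E y -> r <= y.
Proof.
  intros Ea HM.
  destruct (Glb_Rbar_correct E) as [lb glb].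
  assert (H1 : Rbar_le M (Glb_Rbar E)) by (apply glb; intros y Ey; apply HM; auto).
  assert (H2 := lb a Ea).
  destruct (Glb_Rbar E) as [r| |] eqn:Eg; simpl in *; try contradiction.
  exists r; split; [reflexivity|split; [exact H1|intros y Ey; exact (lb y Ey)]].
Qed.

Lemma key (h : R -> R)
  (h_pos : forall x, 0 < x -> 0 < h x)
  (h_slow : is_lim (fun u => u * Derive h u / h u) p_infty 0) :
  forall M, exists N, forall u, N < u ->
   0 < ln u /\ M <= vfun h u /\ vfun h u <= ln u /\
   (forall y, v_set h u y -> vfun h u <= y).
Proof.
  intros M.
  set (K := Rabs M + 1).
  assert (HK : 0 < K) by (unfold K; pose proof (Rabs_pos M); lra).
  assert (HMK : M < K) by (unfold K; pose proof (Rle_abs M); lra).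
  apply is_lim_spec in h_slow. simpl in h_slow.
  destruct (h_slow (mkposreal (/K) (Rinv_0_lt_compat _ HK))) as [T HT]. simpl in HT.
  exists (exp (Rmax T K)). intros u Hu.
  assert (Hu0 : 0 < u) by (pose proof (exp_pos (Rmax T K)); lra).
  assert (HL : Rmax T K < ln u).
  { rewrite <- (ln_exp (Rmax T K)). apply ln_increasing; auto. apply exp_pos. }
  pose proof (Rmax_l T K). pose proof (Rmax_r T K).
  assert (Hlb : forall y, v_set h u y -> M <= y).
  { intros y [->|[t [[Ht1 Ht2] [Hd ->]]]]. lra.
    assert (Ht0 : 0 < t) by lra.
    assert (HTt : T < t) by lra.
    specialize (HT t HTt). rewrite Rminus_0_r in HT.
    pose proof (h_pos t Ht0) as hp.
    assert (Hp : 0 < t * Derive h t / h t).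
    { apply Rdiv_lt_0_compat; auto. apply Rmult_lt_0_compat; auto. }
    rewrite Rabs_pos_eq in HT by lra.
    unfold gfun.
    assert (K <= h t / (t * Derive h t)); [|lra].
    assert (Htd : 0 < t * Derive h t) by (apply Rmult_lt_0_compat; auto).
    apply Rmult_le_reg_r with (t * Derive h t); auto.
    replace (h t / (t * Derive h t) * (t * Derive h t)) with (h t) by (field; lra).
    apply Rmult_lt_compat_r with (r := K * h t) in HT; [|apply Rmult_lt_0_compat; auto].
    replace (t * Derive h t / h t * (K * h t)) with (K * (t * Derive h t)) in HT by (field; lra).
    replace (/ K * (K * h t)) with (h t) in HT by (field; lra). lra. }
  destruct (glb_fin (v_set h u) (ln u) M (or_introl eq_refl) Hlb) as [r [Hr [HMr Hry]]].
  unfold vfun; rewrite Hr; simpl.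
  repeat split; try lra; auto.
  apply Hry; left; reflexivity.
Qed.
Lemma bound (h : R -> R)
  (h_pos : forall x, 0 < x -> 0 < h x)
  (h_diff : forall x, 0 < x -> ex_derive h x) (u v : R) :
  0 < ln u -> 1 <= v -> v <= ln u ->
  (forall y, v_set h u y -> v <= y) ->
  h (v * ln u) / h (ln u) <= exp (ln v / v).
Proof.
  intros HL Hv1 HvL Hy. set (L := ln u) in *.
  set (F := fun t => ln (h t) - ln t / v).
  set (dF := fun t => Derive h t / h t - / t / v).
  assert (HdF : forall t, 0 < t -> is_derive F t (dF t)).
  { intros t Ht. unfold F, dF.
    pose proof (h_pos t Ht). pose proof (h_diff t Ht).
    auto_derive. repeat split; auto. change (Derive (fun x : R => h x) t) with (Derive h t). field. lra. }
  assert (HLvL : L <= v * L) by nra.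
  destruct (MVT_gen F L (v * L) dF) as [c [Hc HF]].
  { intros x Hx. rewrite Rmin_left in Hx by lra. rewrite Rmax_right in Hx by lra.
    apply HdF; lra. }
  { intros x Hx. rewrite Rmin_left in Hx by lra. rewrite Rmax_right in Hx by lra.
    apply continuity_pt_filterlim.
    assert (Hx0 : 0 < x) by lra.
    exact (@ex_derive_continuous R_AbsRing R_NormedModule F x (ex_intro _ _ (HdF x Hx0))). }
  rewrite Rmin_left in Hc by lra. rewrite Rmax_right in Hc by lra.
  assert (Hc0 : 0 < c) by lra.
  pose proof (h_pos c Hc0) as hc.
  assert (Hd : dF c <= 0).
  { unfold dF.
    destruct (Rlt_or_le 0 (Derive h c)) as [Dp|Dn].
    - assert (Hg : v <= gfun h c).
      { apply Hy. right. exists c. split; [split|split; [exact Dp|reflexivity]].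
        - fold L; lra.
        - fold L. simpl. rewrite Rmult_1_r.
          assert (v * L <= L * L) by (apply Rmult_le_compat_r; lra). lra. }
      unfold gfun in Hg.
      assert (Hcd : 0 < c * Derive h c) by (apply Rmult_lt_0_compat; auto).
      apply Rmult_le_compat_r with (r := c * Derive h c) in Hg; [|lra].
      replace (h c / (c * Derive h c) * (c * Derive h c)) with (h c) in Hg by (field; lra).
      replace (Derive h c / h c - / c / v) with ((Derive h c * c * v - h c) / (h c * c * v)) by (field; lra).
      apply Rmult_le_reg_r with (h c * c * v). apply Rmult_lt_0_compat; [apply Rmult_lt_0_compat|]; lra.
      rewrite Rmult_0_l. unfold Rdiv. rewrite Rmult_assoc, Rinv_l, Rmult_1_r. nra.
      apply Rgt_not_eq. apply Rmult_lt_0_compat; [apply Rmult_lt_0_compat|]; lra.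
    - assert (Derive h c / h c <= 0).
      { unfold Rdiv. apply Rmult_le_0_r; auto. left; apply Rinv_0_lt_compat; auto. }
      assert (0 < / c / v). { unfold Rdiv. apply Rmult_lt_0_compat; apply Rinv_0_lt_compat; lra. }
      lra. }
  assert (HFle : F (v * L) - F L <= 0).
  { rewrite HF. apply Rmult_le_0_r; lra. }
  unfold F in HFle.
  rewrite ln_mult in HFle by lra.
  assert (Hv0 : 0 < v) by lra.
  pose proof (h_pos L HL). pose proof (h_pos (v*L) ltac:(lra)).
  assert (ln (h (v * L)) - ln (h L) <= ln v / v).
  { replace ((ln v + ln L) / v) with (ln v / v + ln L / v) in HFle by (field; lra). lra. }
  replace (h (v * L) / h L) with (exp (ln (h (v * L)) - ln (h L))).
  - destruct H1. left; apply exp_increasing; auto. rewrite H1; lra.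
  - unfold Rminus. rewrite exp_plus, exp_Ropp, !exp_ln; auto.
Qed.

Theorem lemma6p3 (h : R -> R)
  (h_pos : forall x, 0 < x -> 0 < h x)
  (h_mono : forall x y, 0 < x -> x <= y -> h x <= h y)
  (h_diff : forall x, 0 < x -> ex_derive h x)
  (h_C1 : forall x, 0 < x -> continuous (Derive h) x)
  (h_inf : is_lim h p_infty p_infty)
  (h_slow : is_lim (fun u => u * Derive h u / h u) p_infty 0) :
  is_lim (vfun h) p_infty p_infty /\
  is_lim (fun u => h (vfun h u * ln u) / h (ln u)) p_infty 1.
Proof.
  pose proof (key h h_pos h_slow) as K.
  assert (Hv : is_lim (vfun h) p_infty p_infty).
  { apply is_lim_spec. intros M. destruct (K (M + 1)) as [N HN].
    exists N. intros u Hu. destruct (HN u Hu) as [_ [H _]]. lra. }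
  split; [exact Hv|].
  apply is_lim_le_le_loc with (f := fun _ => 1)
    (g := fun u => exp (ln (vfun h u) / vfun h u)).
  - destruct (K 1) as [N HN]. exists N. intros u Hu.
    destruct (HN u Hu) as [HL [H1 [H2 H3]]].
    pose proof (h_pos _ HL).
    split.
    + apply Rmult_le_reg_r with (h (ln u)); auto.
      unfold Rdiv. rewrite Rmult_assoc, Rinv_l, Rmult_1_r, Rmult_1_l by lra.
      apply h_mono; auto. nra.
    + apply bound; auto.
  - apply is_lim_const.
  - apply (is_lim_comp (fun y => exp (ln y / y)) (vfun h) p_infty 1 p_infty); auto.
    + replace (Finite 1) with (Finite (exp 0)) by (rewrite exp_0; reflexivity).
      apply (is_lim_comp_continuous (fun y => ln y / y) exp p_infty 0). apply is_lim_div_ln_p. apply continuous_exp.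
    + exists 0. intros; discriminate.
Qed.
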